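(* The graphs $M_2$ and $M_3$ are not in $B_0$.
   Context: $M_2$ is the graph on vertices $a,b,c,d,e,f,g$ with edges $ab,ac,ad,be,cf,dg$. $M_3$ is the graph on vertices $a,b,c,d,e,f$ with edges $ab,ac,bc,ad,be,cf$. $B_0$ is the class of graphs having an EPG representation (a set of paths on a rectangular grid, one per vertex, two vertices adjacent iff their paths share a grid edge) in which no path has a bend, i.e. each path lies on a single grid line. *)

(* Defs.v *)
From mathcomp Require Import all_boot.
From Stdlib Require Import ZArith.

Set Implicit Arguments.
Unset Strict Implicit.
Unset Printing Implicit Defensive.

(* A grid edge of the integer grid Z x Z:
   [GEdge true x y]  is the horizontal unit segment (x,y)--(x+1,y),
   [GEdge false x y] is the vertical unit segment   (x,y)--(x,y+1). *)
Record gedge := GEdge { ge_horiz : bool; ge_x : Z; ge_y : Z }.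

(* A path with no bend: a segment of a single grid line consisting of at least
   one grid edge.  If [p_horiz], it lies on the horizontal line y = p_line and
   runs from (p_lo, p_line) to (p_hi, p_line); otherwise it lies on the
   vertical line x = p_line and runs from (p_line, p_lo) to (p_line, p_hi). *)
Record path0 := Path0 {
  p_horiz : bool; p_line : Z; p_lo : Z; p_hi : Z; p_nonempty : (p_lo < p_hi)%Z }.

Definition on_path (p : path0) (g : gedge) : Prop :=
  ge_horiz g = p_horiz p /\
  if p_horiz p
  then ge_y g = p_line p /\ (p_lo p <= ge_x g < p_hi p)%Z
  else ge_x g = p_line p /\ (p_lo p <= ge_y g < p_hi p)%Z.

Definition share_edge (p q : path0) : Prop :=
  exists g : gedge, on_path p g /\ on_path q g.

(* A graph (vertex type V, adjacency relation adj) is in B_0 if it has an EPG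
   representation in which no path has a bend. *)
Definition B0 (V : finType) (adj : rel V) : Prop :=
  exists P : V -> path0,
    forall u v : V, u != v -> (adj u v <-> share_edge (P u) (P v)).

Definition graph_of_edges (n : nat) (es : seq (nat * nat)) : rel 'I_n :=
  fun u v => ((nat_of_ord u, nat_of_ord v) \in es) || ((nat_of_ord v, nat_of_ord u) \in es).

(* M_2: vertices a,b,c,d,e,f,g = 0,...,6; edges ab,ac,ad,be,cf,dg. *)
Definition M2 : rel 'I_7 :=
  @graph_of_edges 7 [:: (0,1); (0,2); (0,3); (1,4); (2,5); (3,6)].

(* M_3: vertices a,b,c,d,e,f = 0,...,5; edges ab,ac,bc,ad,be,cf. *)
Definition M3 : rel 'I_6 :=
  @graph_of_edges 6 [:: (0,1); (0,2); (1,2); (0,3); (1,4); (2,5)].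

(* Main.v *)
Require Import Defs.
From mathcomp Require Import all_boot.
From Stdlib Require Import ZArith Lia.

Lemma share_E p q : share_edge p q ->
  p_horiz p = p_horiz q /\ p_line p = p_line q /\
  (p_lo p < p_hi q)%Z /\ (p_lo q < p_hi p)%Z.
Proof.
case=> [[h x y]] [[/= Hp Hp'] [/= Hq Hq']].
rewrite Hp in Hq; split; first by [].
move: Hp' Hq'; rewrite Hq; case: (p_horiz q) => /= ; lia.
Qed.

Lemma share_I p q : p_horiz p = p_horiz q -> p_line p = p_line q ->
  (p_lo p < p_hi q)%Z -> (p_lo q < p_hi p)%Z -> share_edge p q.
Proof.
move=> Hh Hl H1 H2.
have Hp := p_nonempty p; have Hq := p_nonempty q.
case E: (p_horiz p).
- exists (GEdge true (Z.max (p_lo p) (p_lo q)) (p_line p)).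
  rewrite /on_path /= -Hh E; split; split => //; split => //; lia.
- exists (GEdge false (p_line p) (Z.max (p_lo p) (p_lo q))).
  rewrite /on_path /= -Hh E; split; split => //; split => //; lia.
Qed.

Section Gen.
Variables (V : finType) (adj : rel V) (P : V -> path0).
Hypothesis H : forall u v : V, u != v -> (adj u v <-> share_edge (P u) (P v)).

Lemma adjE u v : u != v -> adj u v ->
  p_horiz (P u) = p_horiz (P v) /\ p_line (P u) = p_line (P v) /\
  (p_lo (P u) < p_hi (P v))%Z /\ (p_lo (P v) < p_hi (P u))%Z.
Proof. by move=> nuv a; apply: share_E; exact: (proj1 (H u v nuv) a). Qed.

Lemma nadjE u v : u != v -> ~~ adj u v ->
  p_horiz (P u) = p_horiz (P v) -> p_line (P u) = p_line (P v) ->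
  (p_hi (P v) <= p_lo (P u))%Z \/ (p_hi (P u) <= p_lo (P v))%Z.
Proof.
move=> nuv na Hh Hl.
have : ~ share_edge (P u) (P v) by move/(H u v nuv); rewrite (negbTE na).
move=> ns; have S := @share_I _ _ Hh Hl.
case: (Z.lt_ge_cases (p_lo (P u)) (p_hi (P v))) => h1; last by left.
case: (Z.lt_ge_cases (p_lo (P v)) (p_hi (P u))) => h2; last by right.
by case: ns; apply: S.
Qed.
End Gen.

Ltac get H x y := let Hn := fresh in
  have Hn := @adjE _ _ _ H x y isT isT; move: Hn => [? [? [? ?]]].
Ltac non H x y := let Hn := fresh in
  have Hn := @nadjE _ _ _ H x y isT isT ltac:(congruence) ltac:(congruence).

Theorem lemma5p5 : ~ B0 M2 /\ ~ B0 M3.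
Proof.
split.
- case=> P H.
  pose a := @Ordinal 7 0 isT. pose b := @Ordinal 7 1 isT. pose c := @Ordinal 7 2 isT.
  pose d := @Ordinal 7 3 isT. pose e := @Ordinal 7 4 isT. pose f := @Ordinal 7 5 isT.
  pose g := @Ordinal 7 6 isT.
  get H a b. get H a c. get H a d. get H b e. get H c f. get H d g.
  non H b c. non H b d. non H c d. non H a e. non H a f. non H a g.
  lia.
- case=> P H.
  pose a := @Ordinal 6 0 isT. pose b := @Ordinal 6 1 isT. pose c := @Ordinal 6 2 isT.
  pose d := @Ordinal 6 3 isT. pose e := @Ordinal 6 4 isT. pose f := @Ordinal 6 5 isT.
  get H a b. get H a c. get H b c. get H a d. get H b e. get H c f.
  non H d b. non H d c. non H e a. non H e c. non H f a. non H f b.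
  non H d e. non H d f. non H e f.
  have := p_nonempty (P a); have := p_nonempty (P b); have := p_nonempty (P c).
  have := p_nonempty (P d); have := p_nonempty (P e); have := p_nonempty (P f).
  lia.
Qed.
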